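(* Let $0<q\leq 1$, $1\leq r\leq\infty$, $\varepsilon\geq 0$, $A\in\mathbb{R}^{m\times n}$, $D\in\mathbb{R}^{n\times d}$, $y\in\mathbb{R}^m$, and let $s$ be a positive integer. Let $\hat{f}$ be a solution of $$\min_{\tilde{f}\in\mathbb{R}^n}\|D^*\tilde{f}\|_q\quad\text{subject to}\quad\|A\tilde{f}-y\|_r\leq\varepsilon,$$ let $f\in\mathbb{R}^n$ satisfy $\|Af-y\|_r\leq\varepsilon$, and let $h=\hat{f}-f$. Let $\Omega$ be the index set of the $s$ largest entries of $D^*f$ in magnitude, and $T$ the index set of the $s$ largest entries of $D^*h$ in magnitude. Then $$\|Ah\|_q^q\leq m^{1-q/r}(2\varepsilon)^q$$ and $$\|D^*_{T^c}h\|_q^q\leq\|D^*_{T}h\|_q^q+2\|D^*_{\Omega^c}f\|_q^q.$$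
   Context: For $S\subset[d]$, $D_S^*x$ denotes the vector $D^*x$ restricted to the indices in $S$ (other entries zero), and $S^c=[d]\setminus S$. $\|u\|_q^q=\sum_j|u_j|^q$; $\|u\|_\infty=\max_j|u_j|$. *)

(* Defs.v *)
From HB Require Import structures.
From mathcomp Require Import all_boot all_order all_algebra.
From mathcomp Require Import reals ereal exp.
Set Implicit Arguments. Unset Strict Implicit. Unset Printing Implicit Defensive.
Import Order.TTheory GRing.Theory Num.Theory.
Local Open Scope ring_scope.

Definition lpnorm (R : realType) (k : nat) (p : \bar R) (u : 'cV[R]_k) : R :=
  match p with
  | EFin p' => (\sum_(j < k) `|u j 0| `^ p') `^ (p'^-1)
  | _ => \big[Num.max/0]_(j < k) `|u j 0|
  end.

Definition restr (R : realType) (k : nat) (S : {set 'I_k}) (x : 'cV[R]_k)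
  : 'cV[R]_k := \col_(j < k) (if j \in S then x j 0 else 0).

Definition largest_idx (R : realType) (k : nat) (s : nat) (x : 'cV[R]_k)
  (S : {set 'I_k}) : Prop :=
  #|S| = minn s k /\
  (forall i j, i \in S -> j \notin S -> `|x j 0| <= `|x i 0|).

(* the exponent 1 - q/r, with q/oo = 0 *)
Definition exp_1_qr (R : realType) (q : R) (r : \bar R) : R :=
  match r with EFin r' => 1 - q / r' | _ => 1 end.

(* Main.v *)
Require Import Defs.
From HB Require Import structures.
From mathcomp Require Import all_boot all_order all_algebra.
From mathcomp Require Import reals ereal exp.
From mathcomp Require Import convex hoelder lra.
Import Order.TTheory GRing.Theory Num.Theory.
Local Open Scope ring_scope.
Local Open Scope convex_scope.
Section H.
Context {R : realType}.

Lemma powR_subadd (q a b : R) : 0 < q -> q <= 1 -> 0 <= a -> 0 <= b ->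
  (a + b) `^ q <= a `^ q + b `^ q.
Proof.
move=> q0 q1 a0 b0.
have [->|an0] := eqVneq a 0; first by rewrite add0r powR0 ?gt_eqF // add0r.
have [->|bn0] := eqVneq b 0; first by rewrite addr0 powR0 ?gt_eqF // addr0.
have ap : 0 < a by rewrite lt0r an0.
have bp : 0 < b by rewrite lt0r bn0.
set s := a + b. have sp : 0 < s by rewrite addr_gt0.
have Ha : a = s * (a / s) by rewrite mulrC divfK ?gt_eqF.
have Hb : b = s * (b / s) by rewrite mulrC divfK ?gt_eqF.
have sa : 0 <= a / s by rewrite divr_ge0 // ltW.
have sb : 0 <= b / s by rewrite divr_ge0 // ltW.
rewrite {1}Ha {1}Hb (powRM _ (ltW sp) sa) (powRM _ (ltW sp) sb).
have la : a / s <= (a / s) `^ q.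
  apply: ger1_powR => //; rewrite divr_gt0 //= ler_pdivrMr // mul1r lerDl ltW //.
have lb : b / s <= (b / s) `^ q.
  apply: ger1_powR => //; rewrite divr_gt0 //= ler_pdivrMr // mul1r lerDr ltW //.
have e : a / s + b / s = 1 by rewrite -mulrDl mulfV ?gt_eqF.
have sq : 0 <= s `^ q by apply: powR_ge0.
rewrite -mulrDr -{1}(mulr1 (s `^ q)); apply: ler_wpM2l => //.
by rewrite -e lerD.
Qed.

Lemma amgm (p x c : R) : 0 < p -> p <= 1 -> 0 <= x -> 0 < c ->
  x `^ p * c `^ (1 - p) <= p * x + (1 - p) * c.
Proof.
move=> p0 p1 x0 c0.
have [->|pn1] := eqVneq p 1; first by rewrite subrr powRr0 mulr1 powRr1 // mul1r mul0r addr0.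
have p1' : p < 1 by rewrite lt_neqAle pn1.
have q0 : 0 < 1 - p by rewrite subr_gt0.
have := @conjugate_powR R (x `^ p) (c `^ (1 - p)) p^-1 (1 - p)^-1 (powR_ge0 _ _)
  (powR_ge0 _ _) (ltac:(by rewrite invr_gt0)) (ltac:(by rewrite invr_gt0)).
rewrite !invrK addrC subrK => /(_ erefl).
rewrite -!powRrM !mulfV ?gt_eqF // (powRr1 x0) (powRr1 (ltW c0)).
by rewrite (mulrC x) (mulrC c).
Qed.

Lemma powmean (m : nat) (p : R) (b : 'I_m -> R) : 0 < p -> p <= 1 ->
  (forall j, 0 <= b j) ->
  \sum_j b j `^ p <= m%:R `^ (1 - p) * (\sum_j b j) `^ p.
Proof.
move=> p0 p1 b0.
have mp : 0 < m%:R :> R \/ m = 0%N.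
  by case: m b b0 => [|m'] _ _; [right | left; rewrite ltr0n].
case: mp => [mp|m0]; last first.
  by move: b b0; rewrite m0 => b _; rewrite !big_ord0 powR0 ?gt_eqF // mulr0.
set B := \sum_j b j.
have B0 : 0 <= B by rewrite sumr_ge0.
have [BE|Bn0] := eqVneq B 0.
  rewrite big1; first by rewrite mulr_ge0 ?powR_ge0.
  move=> j _; rewrite (psumr_eq0P (fun i _ => b0 i) BE) // powR0 // gt_eqF //.
have Bp : 0 < B by rewrite lt0r Bn0.
set c := B / m%:R.
have cp : 0 < c by rewrite divr_gt0.
have H : c `^ (1 - p) * \sum_j b j `^ p <= B.
  rewrite mulr_sumr.
  apply: (le_trans (y := \sum_(j < m) (p * b j + (1 - p) * c))).
    by apply: ler_sum => j _; rewrite mulrC amgm.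
  rewrite big_split /= -mulr_sumr sumr_const card_ord -mulr_natr /c.
  by rewrite -mulrA divfK ?gt_eqF // -/B -mulrDl subrKC mul1r.
have cq : 0 < c `^ (1 - p) by rewrite powR_gt0.
rewrite -(ler_pM2l cq) (le_trans H) //.
rewrite /c (powRM _ (ltW Bp)); last by rewrite invr_ge0 ltW.
rewrite -(powR_inv1 (ltW mp)) -powRrM mulN1r powRN.
rewrite mulrA divfK; last by rewrite gt_eqF // powR_gt0.
rewrite -powRD; last by rewrite Bn0 implybT.
by rewrite subrK (powRr1 (ltW Bp)).
Qed.

Lemma powR_conv2 (r x y : R) : 1 <= r -> 0 <= x -> 0 <= y ->
  (x + y) `^ r <= 2 `^ r * ((x `^ r + y `^ r) / 2).
Proof.
move=> r1 x0 y0.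
have h0 : 0 <= 2^-1 :> R by rewrite invr_ge0.
have h1 : 2^-1 <= 1 :> R by rewrite invf_le1 // ler1n.
have := @convex_powR R r r1 (Itv01 h0 h1) x y.
have hx : 0 <= x /\ x \in `[0, +oo[ by rewrite in_itv /= andbT.
have hy : 0 <= y /\ y \in `[0, +oo[ by rewrite in_itv /= andbT.
move=> /(_ (classical_sets.mem_set hx.2) (classical_sets.mem_set hy.2)).
move=> H; move: H; rewrite [X in X `^ _ <= _ -> _]convRE convRE /=.
have e : unstable.onem (2^-1 : R) = 2^-1.
  by rewrite /unstable.onem {1}(splitr 1) mul1r addrK.
rewrite e -!mulrDr => H.
have -> : x + y = 2 * (2^-1 * (x + y)) by rewrite mulrA divff ?mul1r // pnatr_eq0.
rewrite powRM // ?mulr_ge0 ?addr_ge0 // ler_wpM2l ?powR_ge0 //.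
by rewrite [_ / 2]mulrC.
Qed.

End H.

Section H2.
Context {R : realType}.

Lemma lp_pow (k : nat) (p : R) (u : 'cV[R]_k) : 0 < p ->
  lpnorm p%:E u `^ p = \sum_j `|u j 0| `^ p.
Proof.
move=> p0 /=; rewrite -powRrM mulVf ?gt_eqF // powRr1 //.
by apply: sumr_ge0 => j _; apply: powR_ge0.
Qed.

Lemma restr_sum (k : nat) (p : R) (S : {set 'I_k}) (x : 'cV[R]_k) : 0 < p ->
  \sum_j `|restr S x j 0| `^ p = \sum_(j in S) `|x j 0| `^ p.
Proof.
move=> p0; rewrite [RHS]big_mkcond /=; apply: eq_bigr => j _.
rewrite mxE; case: (j \in S) => //.
by rewrite normr0 powR0 // gt_eqF.
Qed.

Lemma splitC (k : nat) (S : {set 'I_k}) (F : 'I_k -> R) :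
  \sum_j F j = \sum_(j in S) F j + \sum_(j in ~: S) F j.
Proof.
rewrite (bigID (mem S)) /=; congr (_ + _); apply: eq_bigl => j //.
by rewrite in_setC.
Qed.

Lemma topsum (k : nat) (S T : {set 'I_k}) (w : 'I_k -> R) :
  (forall j, 0 <= w j) -> #|S| = #|T| ->
  (forall i j, i \in T -> j \notin T -> w j <= w i) ->
  \sum_(j in S) w j <= \sum_(j in T) w j.
Proof.
move=> w0 ST Hw.
rewrite (big_setID T) [X in _ <= X](big_setID S) /= setIC lerD2l.
set c := \big[Num.max/0]_(j in S :\: T) w j.
have c0 : 0 <= c by rewrite /c; elim/big_ind: _ => // a b ha hb; rewrite le_max ha.
have le1 : \sum_(j in S :\: T) w j <= \sum_(j in S :\: T) c.
  apply: ler_sum => j hj; rewrite /c.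
  exact: (le_bigmax_cond _ _ hj).
have card : #|S :\: T| = #|T :\: S|.
  have h1 := cardsID T S; have h2 := cardsID S T.
  rewrite setIC ST in h1.
  by apply/eqP; rewrite -(eqn_add2l #|T :&: S|) h1 h2.
apply: (le_trans le1); rewrite sumr_const card -sumr_const.
apply: ler_sum => i; rewrite inE => /andP [niS iT].
rewrite /c; apply: bigmax_le => // j; rewrite inE => /andP [njT jS].
exact: Hw.
Qed.

Lemma norm_split1 (a b : R) : `|a| <= `|a + b| + `|b|.
Proof. by have := ler_normB (a + b) b; rewrite addrK. Qed.

Lemma norm_split2 (a b : R) : `|b| <= `|a + b| + `|a|.
Proof. by have := ler_normB (a + b) a; rewrite addrC addKr. Qed.

Lemma final_arith (G G1 G2 U U1 U2 W W1 W2 WT WT2 : R) :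
  G <= U -> U1 - W1 <= G1 -> W2 - U2 <= G2 -> G = G1 + G2 -> U = U1 + U2 ->
  W = W1 + W2 -> W = WT + WT2 -> W1 <= WT -> WT2 <= WT + 2 * U2.
Proof. move=> *; lra. Qed.

End H2.

Theorem lemma2p9 (R : realType) (m n d : nat) (q : R) (r : \bar R) (eps : R)
  (A : 'M[R]_(m, n)) (D : 'M[R]_(n, d)) (y : 'cV[R]_m) (s : nat)
  (fhat f : 'cV[R]_n) (Omega T : {set 'I_d}) :
  0 < q -> q <= 1 -> (1 <= r)%E -> 0 <= eps -> (0 < s)%N ->
  lpnorm r (A *m fhat - y) <= eps ->
  (forall g : 'cV[R]_n, lpnorm r (A *m g - y) <= eps ->
     lpnorm q%:E (D^T *m fhat) <= lpnorm q%:E (D^T *m g)) ->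
  lpnorm r (A *m f - y) <= eps ->
  largest_idx s (D^T *m f) Omega ->
  largest_idx s (D^T *m (fhat - f)) T ->
  (lpnorm q%:E (A *m (fhat - f))) `^ q <= (m%:R) `^ (exp_1_qr q r) * (2 * eps) `^ q
  /\
  (lpnorm q%:E (restr (~: T) (D^T *m (fhat - f)))) `^ q <=
    (lpnorm q%:E (restr T (D^T *m (fhat - f)))) `^ q
    + 2 * (lpnorm q%:E (restr (~: Omega) (D^T *m f))) `^ q.
Proof.
Proof.
move=> q0 q1 r1 eps0 s0 Ha Hmin Hb [cO HO] [cT HT].
split.
  set a := A *m fhat - y; set b := A *m f - y.
  have eh : A *m (fhat - f) = a - b.
    by rewrite mulmxBr /a /b opprB addrA subrK.
  rewrite eh lp_pow //.
  have ev : forall j, `|(a - b) j 0| <= `|a j 0| + `|b j 0|.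
    by move=> j; rewrite !mxE ler_normB.
  clear Hmin; case: r r1 Ha Hb => [r'| |] // r1 Ha Hb; last first.
    rewrite /exp_1_qr powRr1 ?ler0n //.
    have Hj : forall j, `|(a - b) j 0| `^ q <= (2 * eps) `^ q.
      move=> j; apply: (ge0_ler_powR (ltW q0)); rewrite ?nnegrE ?mulr_ge0 //.
      apply: (le_trans (ev j)); rewrite mulr2n mulrDl mul1r lerD //.
      apply: le_trans Ha; exact: (le_bigmax 0 (fun j => `|a j 0|) j).
      apply: le_trans Hb; exact: (le_bigmax 0 (fun j => `|b j 0|) j).
    apply: (le_trans (ler_sum _ (fun j _ => Hj j))).
    rewrite sumr_const cardT size_enum_ord [m%:R * _]mulr_natl; exact: lexx.
  rewrite lee_fin in r1.
  have r0 : 0 < r' by apply: lt_le_trans r1.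
  have Sa : \sum_j `|a j 0| `^ r' <= eps `^ r'.
    rewrite -(@lp_pow _ _ r' _ r0); apply: (ge0_ler_powR (ltW r0)); [exact: powR_ge0|exact: eps0|exact: Ha].
  have Sb : \sum_j `|b j 0| `^ r' <= eps `^ r'.
    rewrite -(@lp_pow _ _ r' _ r0); apply: (ge0_ler_powR (ltW r0)); [exact: powR_ge0|exact: eps0|exact: Hb].
  have Sv : \sum_j `|(a - b) j 0| `^ r' <= (2 * eps) `^ r'.
    apply: (le_trans (y := \sum_j 2 `^ r' * ((`|a j 0| `^ r' + `|b j 0| `^ r') / 2))).
      apply: ler_sum => j _; apply: (le_trans (y := (`|a j 0| + `|b j 0|) `^ r')); last exact: (powR_conv2 _ _ _ r1 (normr_ge0 (a j 0)) (normr_ge0 (b j 0))).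
      apply: (ge0_ler_powR (ltW r0)); rewrite ?nnegrE ?addr_ge0 //.
    rewrite -mulr_sumr -mulr_suml big_split /= powRM // ler_wpM2l ?powR_ge0 //.
    rewrite ler_pdivrMr; last exact: ltr0Sn.
    rewrite mulr_natr mulr2n; exact: lerD Sa Sb.
  have p0 : 0 < q / r' by rewrite divr_gt0.
  have p1 : q / r' <= 1 by rewrite ler_pdivrMr // mul1r (le_trans q1).
  have -> : \sum_j `|(a - b) j 0| `^ q = \sum_j (`|(a - b) j 0| `^ r') `^ (q / r').
    apply: eq_bigr => j _; rewrite -powRrM mulrCA divff ?mulr1 // gt_eqF //.
  apply: (le_trans (powmean _ _ _ p0 p1 (fun j => powR_ge0 _ _))).
  rewrite /exp_1_qr ler_wpM2l ?powR_ge0 //.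
  apply: le_trans (ge0_ler_powR (ltW p0) _ _ Sv) _.
  - by rewrite nnegrE; apply: sumr_ge0 => j _; exact: powR_ge0.
  - by rewrite nnegrE; exact: powR_ge0.
  rewrite -powRrM mulrCA divff; last by rewrite gt_eqF.
  by rewrite mulr1.
set x := D^T *m f; set h := D^T *m (fhat - f).
have ex : D^T *m fhat = x + h by rewrite /x /h -mulmxDr subrKC.
have H1 := Hmin f Hb.
have F1 : \sum_j `|x j 0 + h j 0| `^ q <= \sum_j `|x j 0| `^ q.
  have n1 : lpnorm q%:E (D^T *m fhat) \is Num.nneg by rewrite nnegrE; exact: powR_ge0.
  have n2 : lpnorm q%:E (D^T *m f) \is Num.nneg by rewrite nnegrE; exact: powR_ge0.
  have H2 : lpnorm q%:E (D^T *m fhat) `^ q <= lpnorm q%:E x `^ q := ge0_ler_powR (ltW q0) n1 n2 H1.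
  have E1 := @lp_pow R d q (D^T *m fhat) q0.
  have E2 := @lp_pow R d q x q0.
  have E3 : \sum_j `|x j 0 + h j 0| `^ q = \sum_j `|(D^T *m fhat) j 0| `^ q.
    by apply: eq_bigr => j _; rewrite ex [(x + h) j 0]mxE.
  rewrite E3 -E1 -E2; exact: H2.
have E4 := @lp_pow R d q (restr (~: T) h) q0.
have E5 := @lp_pow R d q (restr T h) q0.
have E6 := @lp_pow R d q (restr (~: Omega) x) q0.
rewrite (@restr_sum R d q _ _ q0) in E4.
rewrite (@restr_sum R d q _ _ q0) in E5.
rewrite (@restr_sum R d q _ _ q0) in E6.
suff K : \sum_(j in ~: T) `|h j 0| `^ q <= \sum_(j in T) `|h j 0| `^ q + 2 * \sum_(j in ~: Omega) `|x j 0| `^ q.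
  by rewrite -E4 -E5 -E6 in K.
set w := fun j => `|h j 0| `^ q.
set u := fun j => `|x j 0| `^ q.
set g := fun j => `|x j 0 + h j 0| `^ q.
have g1 : forall j, u j - w j <= g j.
  move=> j; rewrite lerBlDr /u /w /g.
  apply: (le_trans (y := (`|x j 0 + h j 0| + `|h j 0|) `^ q)).
    apply: (ge0_ler_powR (ltW q0)); rewrite ?nnegrE.
    - exact: normr_ge0.
    - exact: addr_ge0 (normr_ge0 _) (normr_ge0 _).
    - exact: norm_split1.
  exact: powR_subadd _ _ _ q0 q1 (normr_ge0 _) (normr_ge0 _).
have g2 : forall j, w j - u j <= g j.
  move=> j; rewrite lerBlDr /u /w /g.
  apply: (le_trans (y := (`|x j 0 + h j 0| + `|x j 0|) `^ q)).
    apply: (ge0_ler_powR (ltW q0)); rewrite ?nnegrE.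
    - exact: normr_ge0.
    - exact: addr_ge0 (normr_ge0 _) (normr_ge0 _).
    - exact: norm_split2.
  exact: powR_subadd _ _ _ q0 q1 (normr_ge0 _) (normr_ge0 _).
have L1 : \sum_(j in Omega) (u j - w j) <= \sum_(j in Omega) g j.
  by apply: ler_sum => j _; apply: g1.
have L2 : \sum_(j in ~: Omega) (w j - u j) <= \sum_(j in ~: Omega) g j.
  by apply: ler_sum => j _; apply: g2.
rewrite !sumrB in L1 L2.
have Eg := splitC _ Omega g.
have Eu := splitC _ Omega u.
have Ew1 := splitC _ Omega w.
have Ew2 := splitC _ T w.
have Tp : \sum_(j in Omega) w j <= \sum_(j in T) w j.
  apply: topsum.
  - by move=> j; apply: powR_ge0.
  - by rewrite cO cT.
  move=> i j iT jT; apply: (ge0_ler_powR (ltW q0)); rewrite ?nnegrE ?normr_ge0 //.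
  exact: HT.
have F1' : \sum_j g j <= \sum_j u j := F1.
change (\sum_(j in ~: T) w j <= \sum_(j in T) w j + 2 * \sum_(j in ~: Omega) u j).
exact: (final_arith _ _ _ _ _ _ _ _ _ _ _ F1' L1 L2 Eg Eu Ew1 Ew2 Tp).
Qed.
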